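(* Let $X$ and $Y$ be locally compact paracompact Hausdorff spaces, let $\varepsilon$ be a coarsely connected proper coarse structure on $X$ and $\zeta$ a coarsely connected proper coarse structure on $Y$. Let $\pi: Y \to X$ be a coarse equivalence with quasi-inverse $\varpi: X \to Y$. If $\pi$ and $\varpi$ are continuous, then the categories $\mathrm{Pers}(\varepsilon)$ and $\mathrm{Pers}(\zeta)$ are isomorphic.
   Context: Artin–Wraith glueing: for topological spaces $A,B$, $\mathrm{Closed}(A)$ is the set of closed subsets of $A$. A map $f:\mathrm{Closed}(A)\to\mathrm{Closed}(B)$ is admissible if $f(\emptyset)=\emptyset$ and $f(F_1\cup F_2)=f(F_1)\cup f(F_2)$. For admissible $f$, $A+_fB$ is the set $A\sqcup B$ with the topology whose closed sets are those $D$ with $D\cap A$ closed in $A$, $D\cap B$ closed in $B$ and $f(D\cap A)\subseteq D$. For a locally compact Hausdorff space $X$, $\mathrm{Comp}(X)$ is the category whose objects are compact spaces $X+_fW$ with $W$ compact Hausdorff and $f$ admissible, and whose morphisms are continuous maps restricting to the identity on $X$. Coarse structures (Roe): a coarse structure on a set $X$ is a family $\varepsilon$ of subsets of $X\times X$ containing the diagonal and closed under subsets, finite unions, inverses $e^{-1}=\{(a,b):(b,a)\in e\}$ and compositions $e'\circ e=\{(a,b):\exists c,\,(a,c)\in e,(c,b)\in e'\}$. $B\subseteq X$ is bounded if $B\times B\in\varepsilon$. $(X,\varepsilon)$ is proper if $\varepsilon$ contains a neighbourhood of the diagonal and every bounded set has compact closure; coarsely connected if every singleton $\{(x,y)\}$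 lies in $\varepsilon$. A map $h:(X,\varepsilon)\to(Y,\zeta)$ is coarse if $(h\times h)(e)\in\zeta$ for all $e\in\varepsilon$ and preimages of bounded sets are bounded. Maps $h,h':S\to X$ are close if $\{(h(s),h'(s)):s\in S\}\in\varepsilon$. A coarse equivalence is a coarse map $\pi$ with a coarse map $\varpi$ (quasi-inverse) such that $\pi\circ\varpi$ and $\varpi\circ\pi$ are close to the identities. Perspectivity: if $X$ is locally compact paracompact Hausdorff and $X+_fW$ is a Hausdorff compactification of $X$ (compact Hausdorff, $X$ a dense subspace), a set $e\subseteq X\times X$ is perspective if $\mathrm{Cl}_{(X+_fW)^2}(e)\cap\big((X+_fW)^2- X^2\big)\subseteq\{(p,p):p\in W\}$; $\varepsilon_f$ denotes the set of perspective subsets. For a coarse structure $\varepsilon$ on $X$, such a compactification is perspective if $\varepsilon\subseteq\varepsilon_f$; $\mathrm{Pers}(\varepsilon)$ is the full subcategory of $\mathrm{Comp}(X)$ whose objects are the perspective compactifications of $(X,\varepsilon)$. *)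

(* Defs.v *)
From HB Require Import structures.
From mathcomp Require Import all_boot all_classical all_reals topology.
Set Implicit Arguments. Unset Strict Implicit. Unset Printing Implicit Defensive.
Local Open Scope classical_set_scope.

Definition paracompact (T : topologicalType) :=
  forall U : set (set T), (forall O, U O -> open O) -> \bigcup_(O in U) O = setT ->
  exists V : set (set T),
    [/\ (forall O, V O -> open O), \bigcup_(O in V) O = setT,
        (forall O, V O -> exists2 O', U O' & O `<=` O') &
        (forall x : T, exists2 N, nbhs x N &
           finite_set [set O | V O /\ O `&` N !=set0])].

Definition Closed (T : topologicalType) := {F : set T | closed F}.

Definition closed_set0 (T : topologicalType) : Closed T :=
  exist _ set0 closed0.
Definition closed_setU (T : topologicalType) (F1 F2 : Closed T) : Closed T :=
  exist _ (sval F1 `|` sval F2) (closedU (svalP F1) (svalP F2)).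

Record admissible_map (A B : topologicalType) := AdmissibleMap {
  amap :> Closed A -> Closed B;
  amap0 : sval (amap (closed_set0 A)) = set0;
  amapU : forall F1 F2 : Closed A,
    sval (amap (closed_setU F1 F2)) = sval (amap F1) `|` sval (amap F2) }.

(** extension of an admissible map to all subsets (value on non-closed sets
    is irrelevant and set to the empty set) *)
Definition admext (A B : topologicalType) (f : admissible_map A B)
   (F : set A) : set B :=
  match pselect (closed F) with
  | left h => sval (f (exist _ F h))
  | right _ => set0
  end.

Lemma admextE (A B : topologicalType) (f : admissible_map A B) (F : set A)
  (h : closed F) : admext f F = sval (f (exist _ F h)).
Proof.
rewrite /admext; case: pselect => [h'|//].
by rewrite (Prop_irrelevance h h').
Qed.

Lemma admext0 (A B : topologicalType) (f : admissible_map A B) :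
  admext f set0 = set0.
Proof. by rewrite (admextE _ closed0) -(amap0 f). Qed.

Lemma admextU (A B : topologicalType) (f : admissible_map A B) (F G : set A) :
  closed F -> closed G -> admext f (F `|` G) = admext f F `|` admext f G.
Proof.
move=> hF hG; rewrite (admextE _ hF) (admextE _ hG) (admextE _ (closedU hF hG)).
have := amapU f (exist _ F hF) (exist _ G hG); rewrite /closed_setU /=.
by rewrite (Prop_irrelevance (closedU hF hG) (closedU (svalP (exist closed F hF)) (svalP (exist closed G hG)))).
Qed.

Lemma admext_mono (A B : topologicalType) (f : admissible_map A B) (F G : set A) :
  closed F -> closed G -> F `<=` G -> admext f F `<=` admext f G.
Proof.
move=> hF hG FG; have -> : G = F `|` G by rewrite setUidr.
by rewrite admextU //; apply: subsetUl.
Qed.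

Definition glue_closed (A B : topologicalType) (f : admissible_map A B)
    (D : set (A + B)%type) :=
  [/\ closed (@inl A B @^-1` D), closed (@inr A B @^-1` D) &
      admext f (@inl A B @^-1` D) `<=` @inr A B @^-1` D].

Definition glue_open (A B : topologicalType) (f : admissible_map A B)
    (O : set (A + B)%type) := glue_closed f (~` O).

Lemma glue_openT (A B : topologicalType) (f : admissible_map A B) :
  glue_open f setT.
Proof.
rewrite /glue_open setCT /glue_closed !preimage_set0; split;
  [exact: closed0|exact: closed0|by rewrite admext0].
Qed.

Lemma glue_openI (A B : topologicalType) (f : admissible_map A B) :
  setI_closed (glue_open f).
Proof.
move=> O1 O2 [c1 d1 e1] [c2 d2 e2]; rewrite /glue_open setCI.
rewrite /glue_closed !preimage_setU; split; [exact: closedU|exact: closedU|].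
by rewrite admextU //; apply: setUSS.
Qed.

Lemma glue_open_bigU (A B : topologicalType) (f : admissible_map A B)
  (I : Type) (O : I -> set (A + B)%type) :
  (forall i, glue_open f (O i)) -> glue_open f (\bigcup_i O i).
Proof.
move=> hO; rewrite /glue_open setC_bigcup /glue_closed !preimage_bigcap.
have cl : closed (\bigcap_(i in setT) (@inl A B @^-1` (~` O i))).
  by apply: closed_bigI => i _; have [] := hO i.
split=> //; first by apply: closed_bigI => i _; have [] := hO i.
move=> w hw i _; have [ci _ ei] := hO i; apply: ei.
by apply: (admext_mono cl ci) hw => x; apply.
Qed.

Definition glue (A B : topologicalType) (f : admissible_map A B) : Type :=
  (A + B)%type.

HB.instance Definition _ (A B : topologicalType) (f : admissible_map A B) :=
  Choice.on (glue f).
HB.instance Definition _ (A B : topologicalType) (f : admissible_map A B) :=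
  isOpenTopological.Build (glue f) (glue_openT f) (@glue_openI _ _ f)
    (@glue_open_bigU _ _ f).

Definition gl_inl (A B : topologicalType) (f : admissible_map A B) : A -> glue f :=
  @inl A B.
Definition gl_inr (A B : topologicalType) (f : admissible_map A B) : B -> glue f :=
  @inr A B.

Record CompObj (X : topologicalType) := MkCompObj {
  cW : topologicalType;
  cW_hausdorff : hausdorff_space cW;
  cW_compact : compact [set: cW];
  cf : admissible_map X cW;
  c_compact : compact [set: glue cf] }.

Definition cspace (X : topologicalType) (A : CompObj X) : topologicalType :=
  glue (cf A).

Definition CompHom (X : topologicalType) (A B : CompObj X) :=
  {phi : cspace A -> cspace B |
     continuous phi /\ forall x : X, phi (gl_inl (cf A) x) = gl_inl (cf B) x}.

Definition perspective (X : topologicalType) (A : CompObj X) (e : set (X * X)) :=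
  forall p q : cspace A,
    closure ((fun ab : X * X => (gl_inl (cf A) ab.1, gl_inl (cf A) ab.2)) @` e)
      (p, q) ->
    ~ ((exists a, p = gl_inl (cf A) a) /\ (exists b, q = gl_inl (cf A) b)) ->
    exists w, p = gl_inr (cf A) w /\ q = gl_inr (cf A) w.

(** A is a Hausdorff compactification of X (compactness is part of CompObj)
    and every member of eps is perspective. *)
Definition perspective_compactification (X : topologicalType)
    (eps : set (set (X * X))) (A : CompObj X) :=
  [/\ hausdorff_space (cspace A),
      closure (range (gl_inl (cf A))) = setT &
      forall e, eps e -> perspective A e].

Definition PersObj (X : topologicalType) (eps : set (set (X * X))) :=
  {A : CompObj X | perspective_compactification eps A}.

Definition PersHom (X : topologicalType) (eps : set (set (X * X)))
  (A B : PersObj eps) := CompHom (sval A) (sval B).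

Record PersFunctor (X Y : topologicalType) (eps : set (set (X * X)))
    (zeta : set (set (Y * Y))) := MkPersFunctor {
  fobj : PersObj eps -> PersObj zeta;
  fmor : forall A B, PersHom A B -> PersHom (fobj A) (fobj B);
  fmor_id : forall A (g : PersHom A A), sval g = id -> sval (fmor g) = id;
  fmor_comp : forall A B C (g : PersHom A B) (h : PersHom B C) (k : PersHom A C),
    sval k = sval h \o sval g -> sval (fmor k) = sval (fmor h) \o sval (fmor g) }.

(** Isomorphism of categories: a functor which is a bijection on objects and
    on arrows (equivalently on each hom-set, given bijectivity on objects). *)
Definition pers_isomorphic (X Y : topologicalType) (eps : set (set (X * X)))
    (zeta : set (set (Y * Y))) :=
  exists F : PersFunctor eps zeta,
    bijective (fobj F) /\ forall A B, bijective (@fmor _ _ _ _ F A B).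

Definition diagonal (T : Type) : set (T * T) := [set ab | ab.1 = ab.2].
Definition rel_inv (T : Type) (e : set (T * T)) : set (T * T) :=
  [set ab | e (ab.2, ab.1)].
(** rel_comp e' e = e' o e *)
Definition rel_comp (T : Type) (e' e : set (T * T)) : set (T * T) :=
  [set ab | exists c, e (ab.1, c) /\ e' (c, ab.2)].

Definition coarse_structure (T : Type) (E : set (set (T * T))) :=
  [/\ E (@diagonal T),
      (forall e e', E e -> e' `<=` e -> E e'),
      (forall e e', E e -> E e' -> E (e `|` e')),
      (forall e, E e -> E (rel_inv e)) &
      (forall e e', E e -> E e' -> E (rel_comp e' e))].

Definition coarse_bounded (T : Type) (E : set (set (T * T))) (B : set T) :=
  E (B `*` B).

Definition coarse_proper (T : topologicalType) (E : set (set (T * T))) :=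
  (exists2 e, E e & exists U : set (T * T), [/\ open U, @diagonal T `<=` U & U `<=` e])
  /\ forall B, coarse_bounded E B -> compact (closure B).

Definition coarsely_connected (T : Type) (E : set (set (T * T))) :=
  forall x y : T, E [set (x, y)].

Definition coarse_map (S T : Type) (E : set (set (S * S))) (Z : set (set (T * T)))
    (h : S -> T) :=
  (forall e, E e -> Z ((fun ab : S * S => (h ab.1, h ab.2)) @` e)) /\
  (forall B, coarse_bounded Z B -> coarse_bounded E (h @^-1` B)).

Definition close_maps (S T : Type) (Z : set (set (T * T))) (h h' : S -> T) :=
  Z (range (fun s => (h s, h' s))).

Definition coarse_equivalence (S T : Type) (E : set (set (S * S)))
    (Z : set (set (T * T))) (pi : S -> T) (varpi : T -> S) :=
  [/\ coarse_map E Z pi, coarse_map Z E varpi,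
      close_maps Z (pi \o varpi) id & close_maps E (varpi \o pi) id].

(* Main.v *)
Require Import Defs.
From HB Require Import structures.
From mathcomp Require Import all_boot all_classical all_reals topology.
Set Implicit Arguments. Unset Strict Implicit. Unset Printing Implicit Defensive.
Local Open Scope classical_set_scope.
Local Notation glue := Defs.glue.


Section Glue.
Variables (A B : topologicalType) (f : admissible_map A B).

Lemma glue_closedP (D : set (glue f)) : closed D <-> glue_closed f D.
Proof.
rewrite -openC; change (glue_open f (~` D) <-> glue_closed f D).
by rewrite /glue_open setCK.
Qed.

Lemma admext_closed (F : set A) : closed (admext f F).
Proof. rewrite /admext; case: pselect => h; [exact: svalP | exact: closed0]. Qed.

Lemma glue_closure_inl (F : set A) : closed F ->
  closure (@gl_inl A B f @` F) = (@gl_inl A B f @` F) `|` (@gl_inr A B f @` admext f F).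
Proof.
move=> cF; apply/seteqP; split.
  rewrite closureE; apply: smallest_sub.
    apply/glue_closedP; split.
    - have -> : @inl A B @^-1` (gl_inl f @` F `|` gl_inr f @` admext f F) = F.
        apply/seteqP; split => x /=; last by move=> Fx; left; exists x.
        by case=> [[y Fy [<-]]|[y _ //]].
      exact: cF.
    - have -> : @inr A B @^-1` (gl_inl f @` F `|` gl_inr f @` admext f F) = admext f F.
        apply/seteqP; split => x /=; last by move=> Fx; right; exists x.
        by case=> [[y Fy //]|[y Fy [<-]]].
      exact: admext_closed.
    - move=> w; have -> : @inl A B @^-1` (gl_inl f @` F `|` gl_inr f @` admext f F) = F.
        apply/seteqP; split => x /=; last by move=> Fx; left; exists x.
        by case=> [[y Fy [<-]]|[y _ //]].
      by move=> h; right; exists w.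
  by move=> x; left.
move=> z [|]; first exact: subset_closure.
case=> w fw <-; rewrite closureE => C [/glue_closedP [c1 c2 c3] sC].
apply: c3; apply: (admext_mono cF c1) fw.
by move=> x Fx; apply: sC; exists x.
Qed.

Lemma glue_closure_inlW (F : set A) (w : B) : closed F ->
  closure (@gl_inl A B f @` F) (gl_inr f w) <-> admext f F w.
Proof.
move=> cF; rewrite glue_closure_inl //; split; last by move=> h; right; exists w.
by case=> [[x _ //]|[w' h [<-]]].
Qed.

Lemma glue_closed_inr (C : set B) : closed C -> closed (@gl_inr A B f @` C).
Proof.
move=> cC; apply/glue_closedP; split.
- have -> : @inl A B @^-1` (gl_inr f @` C) = set0.
    by apply/seteqP; split => x //= [y _ //].
  exact: closed0.
- have -> : @inr A B @^-1` (gl_inr f @` C) = C.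
    apply/seteqP; split => x /=; last by move=> h; exists x.
    by case=> y h [<-].
  exact: cC.
- have -> : @inl A B @^-1` (gl_inr f @` C) = set0.
    by apply/seteqP; split => x //= [y _ //].
  by rewrite admext0.
Qed.

Lemma glue_open_inl (O : set A) : open O -> open (@gl_inl A B f @` O).
Proof.
move=> oO; rewrite -closedC; apply/glue_closedP; split.
- have -> : @inl A B @^-1` (~` (gl_inl f @` O)) = ~` O.
    apply/seteqP; split => x /=.
      by move=> h Ox; apply: h; exists x.
    by move=> h [y Oy [e]]; apply: h; rewrite -e.
  by rewrite closedC.
- have -> : @inr A B @^-1` (~` (gl_inl f @` O)) = setT.
    by apply/seteqP; split => x //= _ [y _ //].
  exact: closedT.
- move=> w _ /= [y _ //].
Qed.

Lemma gl_inl_continuous : continuous (@gl_inl A B f).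
Proof. by apply/continuous_closedP => D /glue_closedP []. Qed.

Lemma gl_inr_continuous : continuous (@gl_inr A B f).
Proof. by apply/continuous_closedP => D /glue_closedP []. Qed.

Lemma nbhs_gl_inl (x : A) (U : set A) : nbhs x U -> nbhs (gl_inl f x) (gl_inl f @` U).
Proof.
rewrite nbhsE => -[O [oO Ox] OU]; rewrite nbhsE; exists (gl_inl f @` O).
  by split; [exact: glue_open_inl | exists x].
by move=> z [y Oy <-]; exists y => //; apply: OU.
Qed.

End Glue.


Section Coarse.
Variables (T : topologicalType) (E : set (set (T * T))).
Hypotheses (cs : coarse_structure E) (cp : coarse_proper E) (cc : coarsely_connected E).

Lemma bounded_sub (A B : set T) : coarse_bounded E B -> A `<=` B -> coarse_bounded E A.
Proof.
case: cs => _ sub _ _ _; rewrite /coarse_bounded => bB AB; apply: (sub _ (A `*` A) bB).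
by move=> [x y] [/= /AB ? /AB ?].
Qed.

Lemma bounded0 : coarse_bounded E set0.
Proof. by case: cs => d sub _ _ _; rewrite /coarse_bounded; apply: (sub _ (set0 `*` set0) d); move=> [x y] [/= []]. Qed.

Lemma bounded_union (A B : set T) : coarse_bounded E A -> coarse_bounded E B ->
  coarse_bounded E (A `|` B).
Proof.
case: cs => d sub un inv comp.
have [->|/set0P [a Aa]] := eqVneq A set0; first by move=> _ ?; rewrite set0U.
have [->|/set0P [b Bb]] := eqVneq B set0; first by move=> ? _; rewrite setU0.
rewrite /coarse_bounded => bA bB.
have AB : E (A `*` B).
  apply: (sub _ (A `*` B) (comp _ _ (comp _ _ bA (cc a b)) bB)).
  move=> [x y] [/= Ax By]; exists b; split => //=; exists a; split => //.
have BA : E (B `*` A).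
  apply: (sub _ (B `*` A) (inv _ AB)); by move=> [x y] [/= Bx Ay]; split.
apply: (sub _ ((A `|` B) `*` (A `|` B)) (un _ _ (un _ _ bA bB) (un _ _ AB BA))).
move=> [x y] [/= [Ax|Bx] [Ay|By]]; by [left; left|right; left|right; right|left; right].
Qed.

Lemma bounded_nbhs (x : T) : exists2 V, nbhs x V & coarse_bounded E V.
Proof.
case: cp => -[e Ee [U [oU dU Ue]]] _.
have : nbhs (x, x) U by apply: open_nbhs_nbhs; split => //; apply: dU.
case=> -[V1 V2] /= [nV1 nV2] VU.
exists (V1 `&` V2); first exact: filterI.
rewrite /coarse_bounded.
case: cs => _ sub _ _ _; apply: (sub _ ((V1 `&` V2) `*` (V1 `&` V2)) Ee).
by move=> [a b] [/= [? _] [_ ?]]; apply/Ue/(VU (a, b)).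
Qed.

Lemma compact_bounded (C : set T) : compact C -> coarse_bounded E C.
Proof.
move=> cC; apply: contrapT => nb.
pose G := filter_from (coarse_bounded E) (fun B => C `\` B).
have FG : Filter G.
  apply: filter_from_filter; first by exists set0; exact: bounded0.
  move=> B1 B2 b1 b2; exists (B1 `|` B2); first exact: bounded_union.
  by move=> z [Cz nz]; split; split => // ?; apply: nz; [left|right].
have PG : ProperFilter G.
  apply: filter_from_proper => B bB; apply: contrapT => h; apply: nb.
  apply: (@bounded_sub C B bB) => z Cz; apply: contrapT => nBz; apply: h; by exists z.
have GC : G C by exists set0; [exact: bounded0 | move=> z []].
have [z [Cz clz]] := cC G PG GC.
have [V nV bV] := bounded_nbhs z.
have : G (C `\` V) by exists V.
move/clz => /(_ V nV) [w [[_ nVw] Vw]]; exact: nVw.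
Qed.

End Coarse.


Lemma image_closure_sub (S T : topologicalType) (h : S -> T) (P : set S) :
  continuous h -> h @` closure P `<=` closure (h @` P).
Proof.
move=> ch; have : closed (h @^-1` closure (h @` P)).
  by move/continuous_closedP : ch; apply; exact: closed_closure.
move=> cl; have : closure P `<=` h @^-1` closure (h @` P).
  rewrite closureE; apply: smallest_sub => // x Px; apply: subset_closure; by exists x.
by move=> sub _ [x /sub ? <-].
Qed.

Lemma closure_image_closure (S T : topologicalType) (h : S -> T) (P : set S) :
  continuous h -> closure (h @` closure P) = closure (h @` P).
Proof.
move=> ch; apply/seteqP; split.
  rewrite [X in _ `<=` X](closure_id _).1; last exact: closed_closure.
  by apply: closureS; exact: image_closure_sub.
by apply/closureS/image_subset/subset_closure.
Qed.

Section Persp.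
Variables (X : topologicalType) (A : CompObj X).

Lemma persp_transfer (e : set (X * X)) (S P : set X) (w : cW A) :
  perspective A e -> (forall a b, e (a, b) -> P b) ->
  (forall a, S a -> exists b, e (a, b)) ->
  closure (gl_inl (cf A) @` S) (gl_inr (cf A) w) ->
  closure (gl_inl (cf A) @` P) (gl_inr (cf A) w).
Proof.
move=> pe eP Se clS.
pose B := fun N : set (cspace A) => gl_inl (cf A) @` [set b | exists a, e (a, b) /\ N (gl_inl (cf A) a)].
pose G := filter_from (nbhs (gl_inr (cf A) w : cspace A)) B.
have FG : Filter G.
  apply: filter_from_filter; first by exists setT; exact: filterT.
  move=> N1 N2 n1 n2; exists (N1 `&` N2); first exact: filterI.
  by move=> z [b [a [eab [N1a N2a]]] <-]; split; exists b => //; exists a.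
have PG : ProperFilter G.
  apply: filter_from_proper => N nN.
  have [z [[a Sa <-] Na]] := clS N nN.
  have [b eab] := Se a Sa.
  by exists (gl_inl (cf A) b); exists b => //; exists a.
have [q [_ clq]] := @c_compact _ A G PG filterT.
have clpq : closure ((fun ab : X * X => (gl_inl (cf A) ab.1, gl_inl (cf A) ab.2)) @` e)
   (gl_inr (cf A) w, q).
  move=> M; case=> -[N1 N2] /= [n1 n2] NM.
  have GB : G (B N1) by exists N1.
  have [z [[b [a [eab N1a]] <-] N2b]] := clq _ _ GB n2.
  exists (gl_inl (cf A) a, gl_inl (cf A) b); split; first by exists (a, b).
  by apply: (NM (_, _)); split.
have [w' [ew eq]] : exists w', gl_inr (cf A) w = gl_inr (cf A) w' /\ q = gl_inr (cf A) w'.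
  apply: (pe _ _ clpq); case=> -[a //].
have -> : gl_inr (cf A) w = q by rewrite eq -ew.
move=> N nN; have GP : G (gl_inl (cf A) @` P).
  exists setT; first exact: filterT.
  by move=> z [b [a [eab _]] <-]; exists b => //; apply: eP eab.
by have [z [? ?]] := clq _ _ GP nN; exists z.
Qed.

End Persp.


Section Trans.
Variables (X Y : topologicalType) (eps : set (set (X * X))) (zeta : set (set (Y * Y))).
Variables (pi : Y -> X) (varpi : X -> Y).
Hypotheses (cpi : continuous pi) (cvarpi : continuous varpi).
Hypotheses (csX : coarse_structure eps) (cpX : coarse_proper eps) (ccX : coarsely_connected eps).
Hypotheses (cpY : coarse_proper zeta) (cmpi : coarse_map zeta eps pi).
Hypothesis (close : close_maps eps (pi \o varpi) id).
Hypotheses (lcX : locally_compact [set: X]) (hY : hausdorff_space Y).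

Section G.
Variables (W : topologicalType) (f : admissible_map X W).

Definition gfun (F : Closed Y) : Closed W :=
  f (exist _ (closure (pi @` sval F)) (@closed_closure X _)).

Lemma gfun0 : sval (gfun (closed_set0 Y)) = set0.
Proof. by rewrite /gfun -admextE /= image_set0 closure0 admext0. Qed.

Lemma gfunU F1 F2 : sval (gfun (closed_setU F1 F2)) = sval (gfun F1) `|` sval (gfun F2).
Proof.
rewrite /gfun -!admextE /= image_setU closureU admextU //; exact: closed_closure.
Qed.

Definition gadm : admissible_map Y W := AdmissibleMap gfun0 gfunU.

Lemma admext_gadm (F : set Y) : closed F -> admext gadm F = admext f (closure (pi @` F)).
Proof. by move=> cF; rewrite (admextE _ cF) /= /gfun -admextE. Qed.

Definition Pi (z : glue gadm) : glue f :=
  match z with inl y => gl_inl f (pi y) | inr w => gl_inr f w end.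

Lemma Pi_continuous : continuous Pi.
Proof.
apply/continuous_closedP => D /glue_closedP [c1 c2 c3]; apply/glue_closedP; split.
- exact: ((continuous_closedP pi).1 cpi _ c1).
- exact: c2.
- have cP : closed (pi @^-1` (@inl X W @^-1` D)).
    exact: ((continuous_closedP pi).1 cpi _ c1).
  rewrite (admext_gadm cP) => w h; apply: c3.
  apply: (admext_mono _ c1 _ h); first exact: closed_closure.
  rewrite [X in _ `<=` X](closure_id _).1 //; apply: closureS.
  by move=> x [y Dy <-].
Qed.

Lemma Pi_inl (z : glue gadm) x : Pi z = gl_inl f x -> exists y, z = gl_inl gadm y.
Proof. by case: z => [y|w] //= _; exists y. Qed.

Lemma Pi_inr (z : glue gadm) w : Pi z = gl_inr f w -> z = gl_inr gadm w.
Proof. by case: z => [y|w'] //= [->]. Qed.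

Lemma cluster_Pi (p q : glue gadm) : cluster (nbhs p) q -> cluster (nbhs (Pi p)) (Pi q).
Proof.
move=> cl A B nA nB.
have nA' : nbhs p (Pi @^-1` A) by apply: Pi_continuous.
have nB' : nbhs q (Pi @^-1` B) by apply: Pi_continuous.
by have [z [Az Bz]] := cl _ _ nA' nB'; exists (Pi z).
Qed.

Lemma gadm_hausdorff : hausdorff_space (glue f) -> hausdorff_space (glue gadm).
Proof.
move=> hf p q cl; case: p cl => [y1|w1]; case: q => [y2|w2] cl.
- congr inl; apply: hY => A B nA nB.
  have [z [[a Aa ea] [b Bb eb]]] := cl _ _ (nbhs_gl_inl gadm nA) (nbhs_gl_inl gadm nB).
  by exists a; split => //; move: eb; rewrite -ea => -[<-].
- by have := hf _ _ (cluster_Pi cl).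
- by have := hf _ _ (cluster_Pi cl).
- by have := hf _ _ (cluster_Pi cl) => -[->].
Qed.

Lemma gadm_compact : compact [set: glue f] -> compact [set: glue gadm].
Proof.
move=> cf G PG _.
have PH : ProperFilter (Pi @ G) by exact: fmap_proper_filter.
have [z [_ clz]] := cf _ PH filterT.
case: z clz => [x|w] clz.
- have [V nV [cV clV]] := lcX (I : setT x).
  rewrite withinET in nV.
  pose K := pi @^-1` V.
  have cK : closed K by exact: ((continuous_closedP pi).1 cpi _ clV).
  have bK : coarse_bounded zeta K by apply: cmpi.2; exact: compact_bounded.
  have kK : compact K by rewrite (closure_id K).1 //; apply: cpY.2.
  pose K' := gl_inl gadm @` K.
  have kK' : compact K'.
    apply: continuous_compact => //; apply: continuous_subspaceT.
    exact: gl_inl_continuous.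
  pose G' := within K' G.
  have FG' : Filter G' by exact: within_filter.
  have PG' : ProperFilter G'.
    apply: Build_ProperFilter_ex => P G'P; apply: contrapT => nP.
    have G'P' : G (fun p => K' p -> P p) := G'P.
    have : G (Pi @^-1` (~` (gl_inl f @` V))).
      apply: (filterS _ G'P') => p /= h [u Vu eu]; apply: nP; exists p; apply: h.
      case: (Pi_inl (esym eu)) => y ep; subst p; exists y => //.
      by move: eu => /= [e]; rewrite /K /preimage /= -e.
    move=> HG; have [z [nVz Vz]] := clz _ _ HG (nbhs_gl_inl f nV).
    exact: nVz Vz.
  have [c [K'c clc]] := kK' G' PG' (withinT _ _).
  exists c; split => // P Q GP nQ; apply: clc nQ.
  by apply: filterS GP => p Pp _.
- exists (gl_inr gadm w); split => //.
  rewrite clusterE => P GP.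
  pose E := closure P.
  have : closed E by exact: closed_closure.
  move/glue_closedP => [c1 c2 c3].
  pose Q' := gl_inl f @` closure (pi @` (@inl Y W @^-1` E)) `|` gl_inr f @` (@inr Y W @^-1` E).
  have cQ' : closed Q'.
    apply/glue_closedP; split.
    - have -> : @inl X W @^-1` Q' = closure (pi @` (@inl Y W @^-1` E)).
        apply/seteqP; split => a /=; last by move=> h; left; exists a.
        by case=> [[b h [<-]]|[b _ //]].
      exact: closed_closure.
    - have -> : @inr X W @^-1` Q' = @inr Y W @^-1` E.
        apply/seteqP; split => a /=; last by move=> h; right; exists a.
        by case=> [[b _ //]|[b h [<-]]].
      exact: c2.
    - have -> : @inl X W @^-1` Q' = closure (pi @` (@inl Y W @^-1` E)).
        apply/seteqP; split => a /=; last by move=> h; left; exists a.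
        by case=> [[b h [<-]]|[b _ //]].
      rewrite -admext_gadm // => v h; right; exists v => //; exact: c3.
  have HQ' : G (Pi @^-1` Q').
    apply: filterS GP => p Pp; have Ep : E p by apply: subset_closure.
    case: p Pp Ep => [y|v] _ Ep /=; [left; exists (pi y) | right; exists v] => //.
    by apply: subset_closure; exists y.
  have : closure Q' (gl_inr f w) by move: clz; rewrite clusterE; apply; exact: HQ'.
  rewrite -(closure_id _).1 // => -[[a _ //]|[v Ev [<-]]].
  exact: Ev.
Qed.

End G.

Definition TObj (A : CompObj X) : CompObj Y :=
  @MkCompObj Y (cW A) (@cW_hausdorff X A) (@cW_compact X A) (gadm (cf A))
    (gadm_compact (@c_compact X A)).

End Trans.


Section Trans2.
Variables (X Y : topologicalType) (eps : set (set (X * X))) (zeta : set (set (Y * Y))).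
Variables (pi : Y -> X) (varpi : X -> Y).
Hypotheses (cpi : continuous pi) (cvarpi : continuous varpi).
Hypotheses (csX : coarse_structure eps) (cpX : coarse_proper eps) (ccX : coarsely_connected eps).
Hypotheses (cpY : coarse_proper zeta) (cmpi : coarse_map zeta eps pi).
Hypothesis (close : close_maps eps (pi \o varpi) id).
Hypotheses (lcX : locally_compact [set: X]) (hY : hausdorff_space Y).

Lemma roundtrip (A : CompObj X) : (forall e, eps e -> perspective A e) ->
  forall F, closed F ->
  admext (cf A) (closure (pi @` closure (varpi @` F))) = admext (cf A) F.
Proof.
move=> pA F cF; rewrite closure_image_closure //.
have cS : closed (closure (pi @` (varpi @` F))) by exact: closed_closure.
case: csX => _ sub _ inv _.
apply/seteqP; split => w h.
- have h1 : closure (gl_inl (cf A) @` closure (pi @` (varpi @` F))) (gl_inr (cf A) w).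
    by apply/glue_closure_inlW.
  rewrite closure_image_closure in h1; last exact: gl_inl_continuous.
  apply/(glue_closure_inlW _ _ cF).
  pose e1 := [set ab : X * X | F ab.2 /\ ab.1 = pi (varpi ab.2)].
  apply: (@persp_transfer _ A e1 (pi @` (varpi @` F))) h1.
  + apply: pA; apply: (sub _ e1 close) => -[a b] [Fb /= ->]; by exists b.
  + by move=> a b [].
  + by move=> a [_ [x Fx <-] <-]; exists x.
- have h1 : closure (gl_inl (cf A) @` F) (gl_inr (cf A) w) by apply/glue_closure_inlW.
  apply/(glue_closure_inlW _ _ cS).
  rewrite closure_image_closure; last exact: gl_inl_continuous.
  pose e2 := [set ab : X * X | F ab.1 /\ ab.2 = pi (varpi ab.1)].
  apply: (@persp_transfer _ A e2 F) h1.
  + apply: pA; apply: (sub _ e2 (inv _ close)) => -[a b] [Fa /= ->]; by exists a.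
  + by move=> a b [Fa /= ->]; exists (varpi a) => //; exists a.
  + by move=> a Fa; exists (pi (varpi a)).
Qed.

Lemma TObj_dense (A : CompObj X) : perspective_compactification eps A ->
  closure (range (gl_inl (gadm pi (cf A)))) = setT.
Proof.
move=> [hA dA pA]; apply/seteqP; split => // -[y|w] _.
  by apply: subset_closure; exists y.
have cT : closed (@setT Y) by exact: closedT.
apply/(glue_closure_inlW _ _ cT); rewrite admext_gadm //.
have : admext (cf A) setT w.
  have : closure (range (gl_inl (cf A))) (gl_inr (cf A) w) by rewrite dA.
  by move/glue_closure_inlW; apply; exact: closedT.
rewrite -(roundtrip pA closedT) => h.
apply: (admext_mono _ _ _ h); try exact: closed_closure.
rewrite closure_image_closure //; apply: closureS => _ [_ [x _ <-] <-].
by exists (varpi x).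
Qed.

Lemma TObj_persp (A : CompObj X) : perspective_compactification eps A ->
  perspective_compactification zeta (TObj cpi csX cpX ccX cpY cmpi lcX A).
Proof.
move=> PA; have PA' := PA; case: PA' => hA dA pA; split.
- exact: gadm_hausdorff.
- exact: TObj_dense.
move=> e ze p q clpq nboth.
pose Pi' := Pi (pi:=pi) (f:=cf A).
have cl2 : closure ((fun ab : X * X => (gl_inl (cf A) ab.1, gl_inl (cf A) ab.2)) @`
      ((fun ab : Y * Y => (pi ab.1, pi ab.2)) @` e)) (Pi' p, Pi' q).
  move=> M [[N1 N2] /= [n1 n2] NM].
  have n1' : nbhs p (Pi' @^-1` N1) by apply: Pi_continuous.
  have n2' : nbhs q (Pi' @^-1` N2) by apply: Pi_continuous.
  have : nbhs (p, q) (Pi' @^-1` N1 `*` Pi' @^-1` N2).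
    by exists (Pi' @^-1` N1, Pi' @^-1` N2).
  move/clpq => [[a' b'] [[[a b] eab [<- <-]] /= [N1a N2b]]].
  exists (gl_inl (cf A) (pi a), gl_inl (cf A) (pi b)); split.
    by exists (pi a, pi b) => //; exists (a, b).
  by apply: (NM (_, _)); split.
have e' := cmpi.1 e ze.
have [|w [e1 e2]] := pA _ e' _ _ cl2.
  move=> [[a ea] [b eb]]; apply: nboth.
  by split; [exact: (Pi_inl ea) | exact: (Pi_inl eb)].
by exists w; split; apply: Pi_inr.
Qed.

Lemma phiW (A B : CompObj X) : hausdorff_space (cspace A) ->
  closure (range (gl_inl (cf A))) = setT ->
  forall (phi : CompHom A B) (w : cW A),
  exists w', sval phi (gl_inr (cf A) w) = gl_inr (cf B) w'.
Proof.
move=> hA dA [phi [cphi idphi]] w /=.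
case E: (phi (gl_inr (cf A) w)) => [x|w']; last by exists w'.
exfalso.
have [V nV [cV clV]] := lcX (I : setT x); rewrite withinET in nV.
have n1 : nbhs (gl_inr (cf A) w : cspace A) (phi @^-1` (gl_inl (cf B) @` V)).
  apply: cphi; rewrite E; exact: (nbhs_gl_inl (cf B) nV).
have kV : compact (gl_inl (cf A) @` V : set (cspace A)).
  apply: continuous_compact => //; apply: continuous_subspaceT.
  exact: gl_inl_continuous.
have n2 : nbhs (gl_inr (cf A) w : cspace A) (~` (gl_inl (cf A) @` V)).
  apply: open_nbhs_nbhs; split.
    by rewrite openC; exact: compact_closed.
  by case=> ? _.
have : closure (range (gl_inl (cf A))) (gl_inr (cf A) w) by rewrite dA.
move/(_ _ (filterI n1 n2)) => [_ [[x' _ <-] [/= [u Vu eu] nV']]].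
apply: nV'; exists u => //.
by move: eu; rewrite idphi => -[->].
Qed.

Definition Mfun (A B : CompObj X) (gA : admissible_map Y (cW A))
  (gB : admissible_map Y (cW B)) (phi : cspace A -> cspace B) (z : glue gA) : glue gB :=
  match z with
  | inl y => gl_inl gB y
  | inr w => match phi (gl_inr (cf A) w) with
             | inl x => gl_inl gB (varpi x)
             | inr w' => gl_inr gB w'
             end
  end.
Arguments Mfun {A B} gA gB phi z.

Lemma Mfun_cont (A B : CompObj X) (gA : admissible_map Y (cW A))
  (gB : admissible_map Y (cW B)) :
  hausdorff_space (cspace A) -> closure (range (gl_inl (cf A))) = setT ->
  (forall F, closed F -> admext gA F = admext (cf A) (closure (pi @` F))) ->
  (forall F, closed F -> admext gB F = admext (cf B) (closure (pi @` F))) ->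
  forall phi : CompHom A B, continuous (Mfun gA gB (sval phi)).
Proof.
move=> hA dA RA RB phi.
have pW := phiW hA dA phi.
case: phi pW => phi [cphi idphi] /= pW.
apply/continuous_closedP => D /glue_closedP [c1 c2 c3]; apply/glue_closedP; split.
- exact: c1.
- have -> : @inr Y (cW A) @^-1` (Mfun gA gB phi @^-1` D) =
      gl_inr (cf A) @^-1` (phi @^-1` (gl_inr (cf B) @` (@inr Y (cW B) @^-1` D))).
    apply/seteqP; split => w /=; have [w' ew] := pW w; rewrite /Mfun ew /=.
      by move=> h; exists w'.
    by case=> v h [<-].
  apply: ((continuous_closedP _).1 (@gl_inr_continuous _ _ (cf A))).
  apply: ((continuous_closedP _).1 cphi).
  exact: glue_closed_inr.
- rewrite (RA _ c1) => w h /=.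
  have cS : closed (closure (pi @` (@inl Y (cW B) @^-1` D))) by exact: closed_closure.
  have h1 := (glue_closure_inlW _ _ cS).2 h.
  have h2 := image_closure_sub cphi (ex_intro2 _ _ _ h1 erefl).
  have [w' ew] := pW w; rewrite ew in h2.
  have e3 : phi @` (gl_inl (cf A) @` closure (pi @` (@inl Y (cW B) @^-1` D))) =
            gl_inl (cf B) @` closure (pi @` (@inl Y (cW B) @^-1` D)).
    apply/seteqP; split => z.
      by case=> _ [x Sx <-] <-; rewrite idphi; exists x.
    by case=> x Sx <-; exists (gl_inl (cf A) x); [exists x | rewrite idphi].
  rewrite e3 in h2; have h3 := (glue_closure_inlW _ _ cS).1 h2.
  rewrite /Mfun ew /=; apply: c3; by rewrite (RB _ c1).
Qed.

End Trans2.


Lemma sig_eq (T : Type) (P : T -> Prop) (a b : {x | P x}) : sval a = sval b -> a = b.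
Proof. by case: a b => x px [y py] /= e; subst; congr exist; exact: Prop_irrelevance. Qed.

Lemma adm_eq (A B : topologicalType) (f g : admissible_map A B) :
  (forall F : Closed A, sval (f F) = sval (g F)) -> f = g.
Proof.
case: f g => f f0 fU [g g0 gU] /= h.
have e : f = g by apply: funext => F; apply: sig_eq; exact: h.
subst; congr AdmissibleMap; exact: Prop_irrelevance.
Qed.

Lemma CompObj_eq (X W : topologicalType) (h : hausdorff_space W) (c : compact [set: W])
  (f1 f2 : admissible_map X W) c1 c2 :
  f1 = f2 -> @MkCompObj X W h c f1 c1 = @MkCompObj X W h c f2 c2.
Proof. by move=> e; subst; congr MkCompObj; exact: Prop_irrelevance. Qed.

Definition pc_haus X eps (A : CompObj X) (PA : perspective_compactification eps A) :
  hausdorff_space (cspace A) := let: And3 a _ _ := PA in a.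
Definition pc_dense X eps (A : CompObj X) (PA : perspective_compactification eps A) :
  closure (range (gl_inl (cf A))) = setT := let: And3 _ a _ := PA in a.
Definition pc_persp X eps (A : CompObj X) (PA : perspective_compactification eps A) :
  forall e, eps e -> perspective A e := let: And3 _ _ a := PA in a.


Definition Mhom (X Y : topologicalType) (pi : Y -> X) (varpi : X -> Y)
  (lcX : locally_compact [set: X]) (A B : CompObj X)
  (hA : hausdorff_space (cspace A)) (dA : closure (range (gl_inl (cf A))) = setT)
  (gA : admissible_map Y (cW A)) (gB : admissible_map Y (cW B))
  (RA : forall F, closed F -> admext gA F = admext (cf A) (closure (pi @` F)))
  (RB : forall F, closed F -> admext gB F = admext (cf B) (closure (pi @` F)))
  (phi : CompHom A B) :
  {psi : glue gA -> glue gB | continuous psi /\ forall y, psi (gl_inl gA y) = gl_inl gB y} :=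
  exist _ (Mfun varpi gB (sval phi)) (conj (Mfun_cont lcX hA dA RA RB (phi:=phi)) (fun y => erefl)).


Section Main.
Variables (X Y : topologicalType) (eps : set (set (X * X))) (zeta : set (set (Y * Y))).
Variables (pi : Y -> X) (varpi : X -> Y).
Hypotheses (cpi : continuous pi) (cvarpi : continuous varpi).
Hypotheses (csX : coarse_structure eps) (cpX : coarse_proper eps) (ccX : coarsely_connected eps).
Hypotheses (csY : coarse_structure zeta) (cpY : coarse_proper zeta) (ccY : coarsely_connected zeta).
Hypotheses (cmpi : coarse_map zeta eps pi) (cmvarpi : coarse_map eps zeta varpi).
Hypotheses (close1 : close_maps eps (pi \o varpi) id) (close2 : close_maps zeta (varpi \o pi) id).
Hypotheses (lcX : locally_compact [set: X]) (hY : hausdorff_space Y).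
Hypotheses (lcY : locally_compact [set: Y]) (hX : hausdorff_space X).

Definition TP (A : PersObj eps) : PersObj zeta :=
  exist _ (TObj cpi csX cpX ccX cpY cmpi lcX (sval A))
    (TObj_persp cpi csX cpX ccX cpY cmpi close1 lcX hY (svalP A)).

Definition TP' (B : PersObj zeta) : PersObj eps :=
  exist _ (TObj cvarpi csY cpY ccY cpX cmvarpi lcY (sval B))
    (TObj_persp cvarpi csY cpY ccY cpX cmvarpi close2 lcY hX (svalP B)).

Lemma TPK : cancel TP TP'.
Proof.
move=> [[W h c f cc] PA]; apply: sig_eq => /=; apply: CompObj_eq.
apply: adm_eq => -[F cF] /=; rewrite /gfun /= -!admextE.
exact: (roundtrip cpi csX close1 (pc_persp PA) cF).
Qed.

Lemma TP'K : cancel TP' TP.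
Proof.
move=> [[W h c f cc] PA]; apply: sig_eq => /=; apply: CompObj_eq.
apply: adm_eq => -[F cF] /=; rewrite /gfun /= -!admextE.
exact: (roundtrip cvarpi csY close2 (pc_persp PA) cF).
Qed.

Definition fm (A B : PersObj eps) (phi : PersHom A B) : PersHom (TP A) (TP B) :=
  @Mhom X Y pi varpi lcX (sval A) (sval B) (pc_haus (svalP A)) (pc_dense (svalP A))
    (gadm pi (cf (sval A))) (gadm pi (cf (sval B)))
    (@admext_gadm X Y pi _ (cf (sval A))) (@admext_gadm X Y pi _ (cf (sval B))) phi.

Lemma RT (A : PersObj eps) F : closed F ->
  admext (cf (sval A)) F = admext (gadm pi (cf (sval A))) (closure (varpi @` F)).
Proof.
move=> cF; rewrite admext_gadm; last exact: closed_closure.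
by rewrite (roundtrip cpi csX close1 (pc_persp (svalP A)) cF).
Qed.

Definition fm' (A B : PersObj eps) (psi : PersHom (TP A) (TP B)) : PersHom A B :=
  @Mhom Y X varpi pi lcY (sval (TP A)) (sval (TP B)) (pc_haus (svalP (TP A)))
    (pc_dense (svalP (TP A)))
    (cf (sval A)) (cf (sval B)) (@RT A) (@RT B) psi.

Lemma fmK A B : cancel (@fm A B) (@fm' A B).
Proof.
move=> phi; apply: sig_eq; apply: funext => -[x|w] /=.
  by rewrite (proj2 (svalP phi)).
have [w' ew] := phiW lcX (pc_haus (svalP A)) (pc_dense (svalP A)) phi w.
by rewrite /Mfun /= ew.
Qed.

Lemma fm'K A B : cancel (@fm' A B) (@fm A B).
Proof.
move=> psi; apply: sig_eq; apply: funext => -[y|w] /=.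
  by rewrite (proj2 (svalP psi)).
have [w' ew] := phiW lcY (pc_haus (svalP (TP A))) (pc_dense (svalP (TP A))) psi w.
by rewrite /Mfun /= ew.
Qed.

Lemma fm_id A (g : PersHom A A) : sval g = id -> sval (@fm A A g) = id.
Proof.
move=> e; apply: funext => -[y|w] //=.
by rewrite /Mfun e.
Qed.

Lemma fm_comp A B C (g : PersHom A B) (h : PersHom B C) (k : PersHom A C) :
  sval k = sval h \o sval g -> sval (fm k) = sval (fm h) \o sval (fm g).
Proof.
move=> e; apply: funext => -[y|w] //=.
rewrite /Mfun e /=; case: (sval g (gl_inr (cf (sval A)) w)) => [x|w'] //=.
by rewrite (proj2 (svalP h)).
Qed.

Definition TFun : PersFunctor eps zeta := MkPersFunctor fm_id fm_comp.

Lemma iso : pers_isomorphic eps zeta.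
Proof.
exists TFun; split.
  by exists TP'; [exact: TPK | exact: TP'K].
by move=> A B; exists (@fm' A B); [exact: fmK | exact: fm'K].
Qed.

End Main.


Theorem mainTheorem1 (X Y : topologicalType)
  (eps : set (set (X * X))) (zeta : set (set (Y * Y)))
  (pi : Y -> X) (varpi : X -> Y) :
  locally_compact [set: X] -> paracompact X -> hausdorff_space X ->
  locally_compact [set: Y] -> paracompact Y -> hausdorff_space Y ->
  coarse_structure eps -> coarse_proper eps -> coarsely_connected eps ->
  coarse_structure zeta -> coarse_proper zeta -> coarsely_connected zeta ->
  coarse_equivalence zeta eps pi varpi ->
  continuous pi -> continuous varpi ->
  pers_isomorphic eps zeta.
Proof.
move=> lcX _ hX lcY _ hY csX cpX ccX csY cpY ccY [cm1 cm2 cl1 cl2] cpi cvarpi.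
exact: (iso cpi cvarpi csX cpX ccX csY cpY ccY cm1 cm2 cl1 cl2 lcX hY lcY hX).
Qed.
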